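(* Let $\mathcal H$ be a real Hilbert space with inner product $\langle\cdot,\cdot\rangle$ and norm $\|\cdot\|$. Let $A, L_1, L_2$ be bounded linear operators on $\mathcal H$ and $b\in\mathcal H$, and define $$E(u)=\tfrac12\|Au-b\|^2,\qquad J_i(\mu)=\tfrac12\|L_i\mu\|^2\ (i=1,2),\qquad J(\mu)=J_1(\mu)-J_2(\mu),$$ where it is assumed that there is a bounded linear operator $L$ on $\mathcal H$ with $L^*L=L_1^*L_1-L_2^*L_2$, so that $J(\mu)=\tfrac12\|L\mu\|^2$. Fix $\delta t>0$. Let $(u^n,\mu^n,r^n)_{n\ge 0}\subset \mathcal H\times\mathcal H\times\mathbb R$ be a sequence satisfying, for every $n\ge0$ (with $J_2(\mu^n)>0$ so that the scheme is defined), $$\begin{cases}\dfrac{u^{n+1}-u^n}{\delta t} = -L_1^*L_1\mu^{n+1}+\dfrac{r^{n+1}}{\sqrt{J_2(\mu^n)}}\,L_2^*L_2\mu^n,\\[2mm] r^{n+1}-r^n=\dfrac{1}{2\sqrt{J_2(\mu^n)}}\langle L_2\mu^n, L_2(\mu^{n+1}-\mu^n)\rangle,\\[2mm] \mu^{n+1}=\nabla E(u^{n+1}),\end{cases}$$ with initial data satisfying $\mu^0=\nabla E(u^0)$ and $r^0=\sqrt{J_2(\mu^0)}$. Then: (i) for every $n\in\mathbb N$, if $r^{n+1}\ge 0$ then $E(u^{n+1})\le E(u^n)$; (ii) the functional $\tilde J(\mu,r):=\tfrac12\|L_1\mu\|^2-r^2$ satisfies $\tilde J(\mu^{n+1},r^{n+1})\le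 \tilde J(\mu^n,r^n)$ for every $n\in\mathbb N$.
   Context: $L_i^*$ denotes the Hilbert adjoint of $L_i$; $\nabla E(u)=A^*(Au-b)$ is the gradient of $E$ in $\mathcal H$. This is the first-order ''mobility SAV'' scheme for the gradient flow $u_t=-\nabla J(\mu)$, $\mu=\nabla E(u)$, where the scalar auxiliary variable $r$ approximates $\sqrt{J_2(\mu)}$. *)

(* Defs.v *)
From HB Require Import structures.
From mathcomp Require Import all_boot all_order all_algebra.
From mathcomp Require Import all_classical all_reals all_analysis.
Set Implicit Arguments. Unset Strict Implicit. Unset Printing Implicit Defensive.
Import Order.TTheory GRing.Theory Num.Theory.
Import numFieldNormedType.Exports.
Local Open Scope ring_scope.

Definition is_inner_product (R : realType) (V : normedModType R)
  (ip : V -> V -> R) : Prop :=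
  [/\ (forall x y, ip x y = ip y x),
      (forall (a : R) x y z, ip (a *: x + y) z = a * ip x z + ip y z)
    & (forall x, `|x| ^+ 2 = ip x x)].

Definition is_adjoint (R : realType) (V : normedModType R)
  (ip : V -> V -> R) (T Ts : V -> V) : Prop :=
  forall x y, ip (T x) y = ip x (Ts y).

Definition bounded_op (R : realType) (V : normedModType R) (T : {linear V -> V}) : Prop :=
  continuous T.

Definition Efun (R : realType) (V : normedModType R) (A : V -> V) (b u : V) : R :=
  2^-1 * `|A u - b| ^+ 2.

Definition gradE (R : realType) (V : normedModType R) (A As : V -> V) (b u : V) : V :=
  As (A u - b).

Definition Jq (R : realType) (V : normedModType R) (Li : V -> V) (mu : V) : R :=
  2^-1 * `|Li mu| ^+ 2.

Definition Jtilde (R : realType) (V : normedModType R) (L1 : V -> V) (mu : V) (r : R) : R :=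
  2^-1 * `|L1 mu| ^+ 2 - r ^+ 2.

(* Main.v *)
Require Import Defs.
From HB Require Import structures.
From mathcomp Require Import all_boot all_order all_algebra.
From mathcomp Require Import all_classical all_reals all_analysis.
From mathcomp Require Import lra ring.
Import Order.TTheory GRing.Theory Num.Theory.
Import numFieldNormedType.Exports.
Local Open Scope ring_scope.

Set Implicit Arguments. Unset Strict Implicit.
Lemma ip0l (R : realType) (V : normedModType R) (ip : V -> V -> R)
  (hip : is_inner_product ip) z : ip 0 z = 0.
Proof.
case: hip => _ h _; have := h (-1) 0 0 z.
by rewrite scaler0 addr0 mulN1r addNr.
Qed.
Lemma ipDl (R : realType) (V : normedModType R) (ip : V -> V -> R)
  (hip : is_inner_product ip) x y z : ip (x + y) z = ip x z + ip y z.
Proof. case: hip => _ h _. by have := h 1 x y z; rewrite scale1r mul1r. Qed.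
Lemma ipZl (R : realType) (V : normedModType R) (ip : V -> V -> R)
  (hip : is_inner_product ip) a x z : ip (a *: x) z = a * ip x z.
Proof.
have h0 := ip0l hip z.
by case: hip => _ h _; rewrite -[a *: x]addr0 h h0 addr0.
Qed.
Lemma ipNl (R : realType) (V : normedModType R) (ip : V -> V -> R)
  (hip : is_inner_product ip) x z : ip (- x) z = - ip x z.
Proof. by rewrite -scaleN1r (ipZl hip) mulN1r. Qed.
Lemma ipBl (R : realType) (V : normedModType R) (ip : V -> V -> R)
  (hip : is_inner_product ip) x y z : ip (x - y) z = ip x z - ip y z.
Proof. by rewrite (ipDl hip) (ipNl hip). Qed.
Lemma ipBr (R : realType) (V : normedModType R) (ip : V -> V -> R)
  (hip : is_inner_product ip) x y z : ip z (x - y) = ip z x - ip z y.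
Proof. by have [hs _ _] := hip; rewrite !(hs z) (ipBl hip). Qed.
Lemma ipDr (R : realType) (V : normedModType R) (ip : V -> V -> R)
  (hip : is_inner_product ip) x y z : ip z (x + y) = ip z x + ip z y.
Proof. by have [hs _ _] := hip; rewrite !(hs z) (ipDl hip). Qed.
Lemma ipZr (R : realType) (V : normedModType R) (ip : V -> V -> R)
  (hip : is_inner_product ip) a x z : ip z (a *: x) = a * ip z x.
Proof. by have [hs _ _] := hip; rewrite !(hs z) (ipZl hip). Qed.
Lemma ipge0 (R : realType) (V : normedModType R) (ip : V -> V -> R)
  (hip : is_inner_product ip) x : 0 <= ip x x.
Proof. by have [_ _ hn] := hip; rewrite -hn sqr_ge0. Qed.
Lemma ipCS (R : realType) (V : normedModType R) (ip : V -> V -> R)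
  (hip : is_inner_product ip) x y : 0 < ip x x ->
  ip x y ^+ 2 <= ip x x * ip y y.
Proof.
move=> hp.
set t := ip x y / ip x x.
have := ipge0 hip (t *: x - y).
rewrite !(ipBl hip) !(ipBr hip) !(ipZl hip) !(ipZr hip).
have [hs _ _] := hip; rewrite (hs y x).
move=> h.
have hpn : ip x x != 0 by rewrite gt_eqF.
have ht : t * ip x x = ip x y by rewrite /t mulfVK.
move: h; rewrite ht subrr sub0r opprB => h.
have h2 : 0 <= ip x x * (ip y y - t * ip x y) by apply: mulr_ge0 => //; exact: ltW.
move: h2; rewrite mulrBr mulrA (mulrC (ip x x) t) ht -expr2 subr_ge0.
done.
Qed.

Lemma sc1 (R : realType) (a a2 p c q : R) : 0 < a -> 0 < a2 ->
  a2 ^+ 2 = 2^-1 * c -> a ^+ 2 = 2^-1 * p -> q ^+ 2 <= p * c -> q <= 2 * a * a2.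
Proof.
move=> h1 h2 h3 h4 h5.
have hX : 0 < 2 * a * a2 by rewrite !mulr_gt0.
have ep : p = 2 * a ^+ 2 by rewrite h4 mulrA divff ?mul1r // pnatr_eq0.
have ec : c = 2 * a2 ^+ 2 by rewrite h3 mulrA divff ?mul1r // pnatr_eq0.
have h6 : q ^+ 2 <= (2 * a * a2) ^+ 2.
  by move: h5; rewrite ep ec; congr (_ <= _); ring.
case: (lerP q (2 * a * a2)) => // hlt.
have := ltrXn2r 2 (ltW hX) hlt; rewrite /= ltNge h6 //.
Qed.

Lemma sc2 (R : realType) (s s' r' c q ee dt dm : R) : 0 < s -> 0 <= r' -> r' <= s' ->
  s' ^+ 2 = 2^-1 * q -> c <= 2 * s * s' -> q <= ee -> 0 < dt ->
  dt^-1 * dm = - ee + r' / s * c -> dm <= 0.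
Proof.
move=> h1 h2 h3 h4 h5 h6 h7 h8.
have eq : q = 2 * s' ^+ 2 by rewrite h4 mulrA divff ?mul1r // pnatr_eq0.
have hk : r' / s * c <= q.
  rewrite mulrAC ler_pdivrMr //.
  have hs' : 0 <= s' by apply: le_trans h3.
  rewrite eq.
  have hss : 0 <= 2 * s' ^+ 2 * s by rewrite !mulr_ge0 // ?sqr_ge0 // ltW.
  case: (lerP c 0) => hc.
    by apply: le_trans hss; rewrite mulr_ge0_le0.
  have a1 : r' * c <= s' * c by rewrite ler_pM2r.
  have a2 : s' * c <= s' * (2 * s * s') by rewrite ler_wpM2l.
  apply: le_trans a1 _; apply: le_trans a2 _; rewrite le_eqVlt; apply/orP; left; apply/eqP; ring.
have edm : dm = dt * (dt^-1 * dm) by rewrite mulrA divff ?mul1r // gt_eqF.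
rewrite edm h8; apply: mulr_ge0_le0; [exact: ltW | lra].
Qed.

Lemma sc4 (R : realType) (dt D s r r' ee e0e e0e0 gg iag p : R) :
  0 < dt -> 0 <= D -> dt^-1 * D = -(ee - e0e) + r' / s * iag ->
  iag = 2 * s * (r' - r) -> 0 < s -> iag ^+ 2 <= p * gg -> s ^+ 2 = 2^-1 * p ->
  gg <= ee - e0e - (e0e - e0e0) ->
  2^-1 * ee - r' ^+ 2 <= 2^-1 * e0e0 - r ^+ 2.
Proof.
move=> h1 h2 h3 h4 h5 h6 h7 h8.
have ep : p = 2 * s ^+ 2 by rewrite h7 mulrA divff ?mul1r // pnatr_eq0.
have hk : r' / s * iag = 2 * r' * (r' - r) by rewrite h4; field; rewrite gt_eqF.
have h0 : 0 <= dt^-1 * D by rewrite mulr_ge0 // invr_ge0 ltW.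
rewrite h3 hk in h0.
have hg : 2 * (r' - r) ^+ 2 <= gg.
  move: h6; rewrite h4 ep => h6.
  have hs2 : 0 < s ^+ 2 by rewrite exprn_gt0.
  have : s ^+ 2 * (2 * (2 * (r' - r) ^+ 2)) <= s ^+ 2 * (2 * gg).
    by move: h6; congr (_ <= _); ring.
  rewrite ler_pM2l // ler_pM2l //.
lra.
Qed.

Theorem proposition3p1 (R : realType) (V : completeNormedModType R)
  (ip : V -> V -> R) (hip : is_inner_product ip)
  (A L1 L2 : {linear V -> V}) (As L1s L2s : V -> V)
  (hA : bounded_op A) (hL1 : bounded_op L1) (hL2 : bounded_op L2)
  (hAs : is_adjoint ip A As) (hL1s : is_adjoint ip L1 L1s)
  (hL2s : is_adjoint ip L2 L2s)
  (b : V)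
  (hL : exists (L : {linear V -> V}) (Ls : V -> V),
      [/\ bounded_op L, is_adjoint ip L Ls &
          forall x, Ls (L x) = L1s (L1 x) - L2s (L2 x)])
  (dt : R) (hdt : 0 < dt)
  (u mu : nat -> V) (r : nat -> R)
  (hJ2 : forall n, 0 < Jq L2 (mu n))
  (hu : forall n, dt^-1 *: (u n.+1 - u n) =
         - L1s (L1 (mu n.+1))
         + (r n.+1 / Num.sqrt (Jq L2 (mu n))) *: L2s (L2 (mu n)))
  (hr : forall n, r n.+1 - r n =
         (2 * Num.sqrt (Jq L2 (mu n)))^-1 * ip (L2 (mu n)) (L2 (mu n.+1 - mu n)))
  (hmu : forall n, mu n.+1 = gradE A As b (u n.+1))
  (hmu0 : mu 0%N = gradE A As b (u 0%N))
  (hr0 : r 0%N = Num.sqrt (Jq L2 (mu 0%N))) :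
  (forall n, 0 <= r n.+1 -> Efun A b (u n.+1) <= Efun A b (u n)) /\
  (forall n, Jtilde L1 (mu n.+1) (r n.+1) <= Jtilde L1 (mu n) (r n)).
Proof.
have [hs hl hn] := hip.
have adj : forall (T : {linear V -> V}) Ts, is_adjoint ip T Ts ->
  forall x y, ip (Ts y) x = ip (T x) y.
  by move=> T Ts hT x y; rewrite hs -hT.
have hLf : forall x, ip (L2 x) (L2 x) <= ip (L1 x) (L1 x).
  move=> x; case: hL => L [Ls [_ hLs hLL]].
  have := ipge0 hip (L x); rewrite hLs hLL (ipBr hip) -hL1s -hL2s.
  by rewrite subr_ge0.
have hg : forall n, mu n = As (A (u n) - b).
  by case=> [|n]; [exact: hmu0 | exact: hmu].
pose s n := Num.sqrt (Jq L2 (mu n)).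
have hs0 : forall n, 0 < s n by move=> n; rewrite sqrtr_gt0.
have hs2 : forall n, s n ^+ 2 = 2^-1 * ip (L2 (mu n)) (L2 (mu n)).
  by move=> n; rewrite sqr_sqrtr ?(ltW (hJ2 n)) // /Jq hn.
have hrr : forall n, ip (L2 (mu n)) (L2 (mu n.+1 - mu n)) = 2 * s n * (r n.+1 - r n).
  by move=> n; rewrite hr mulrA mulfV ?mul1r // mulf_neq0 ?pnatr_eq0 // gt_eqF.
have hc : forall n, ip (L2 (mu n)) (L2 (mu n.+1)) = 2 * s n * (r n.+1 - r n) + 2 * s n ^+ 2.
  by move=> n; rewrite -hrr linearB /= (ipBr hip) hs2 mulrA divff ?pnatr_eq0 // mul1r subrK.
have hcs : forall n, ip (L2 (mu n)) (L2 (mu n.+1)) <= 2 * s n * s n.+1.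
  move=> k.
  have p0 : 0 < ip (L2 (mu k)) (L2 (mu k)).
    by rewrite -hn; have := hJ2 k; rewrite /Jq; nra.
  have := ipCS hip (x := L2 (mu k)) (L2 (mu k.+1)) p0.
  have := hs2 k; have := hs2 k.+1; have := hs0 k; have := hs0 k.+1.
  move=> h1 h2 h3 h4 h5; exact: (sc1 h2 h1 h3 h4).
have hinv : forall n, r n <= s n.
  elim=> [|n IH]; first by rewrite hr0 /s.
  have := hcs n; have := hc n; have := hs0 n; nra.
have eXY : forall n, (A (u n.+1) - b) - (A (u n) - b) = A (u n.+1 - u n).
  by move=> n; rewrite [RHS]linearB /= opprB addrA subrK.
split.
  move=> n hr1.
  have e1 : ip (dt^-1 *: (u n.+1 - u n)) (mu n.+1) = ip (- L1s (L1 (mu n.+1))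
         + (r n.+1 / Num.sqrt (Jq L2 (mu n))) *: L2s (L2 (mu n))) (mu n.+1) by rewrite hu.
  rewrite (ipZl hip) [RHS](ipDl hip) (ipNl hip (L1s _)) (ipZl hip) (adj _ _ hL1s) (adj _ _ hL2s) in e1.
  rewrite /Efun !hn.
  set X := A (u n.+1) - b; set Y := A (u n) - b.
  have eY : Y = X - (X - Y) by rewrite opprB addrC subrK.
  rewrite [in X in _ <= X]eY eXY.
  have hDX : ip (A (u n.+1 - u n)) X = ip (u n.+1 - u n) (mu n.+1) by rewrite hAs hmu.
  have hDD := ipge0 hip (A (u n.+1 - u n)).
  move: hDX hDD; set D := A (u n.+1 - u n); clearbody X D => hDX hDD.
  rewrite (ipBl hip) !(ipBr hip) (hs X D) hDX.
  have hdm : ip (u n.+1 - u n) (mu n.+1) <= 0.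
    apply: (sc2 (hs0 n) hr1 (hinv n.+1) (hs2 n.+1) _ (hLf _) hdt e1).
    by rewrite hs; apply: hcs.
  have := ipge0 hip (A (u n.+1 - u n)). lra.
move=> n.
have e2 : ip (dt^-1 *: (u n.+1 - u n)) (mu n.+1 - mu n) = ip (- L1s (L1 (mu n.+1))
         + (r n.+1 / Num.sqrt (Jq L2 (mu n))) *: L2s (L2 (mu n))) (mu n.+1 - mu n) by rewrite hu.
rewrite (ipZl hip) [RHS](ipDl hip) (ipNl hip (L1s _)) (ipZl hip) (adj _ _ hL1s) (adj _ _ hL2s) in e2.
have hD : 0 <= ip (u n.+1 - u n) (mu n.+1 - mu n).
  rewrite (ipBr hip) !hg -!hAs -(ipBr hip) eXY; exact: ipge0.
rewrite /Jtilde !hn.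
move: e2; rewrite (hs (L2 _)) hrr linearB /= (ipBl hip (L1 _)) => e2.
have p0 : 0 < ip (L2 (mu n)) (L2 (mu n)).
  by rewrite -hn; have := hJ2 n; rewrite /Jq; nra.
have hcs2 := ipCS hip (x := L2 (mu n)) (L2 (mu n.+1 - mu n)) p0.
rewrite hrr in hcs2.
have hl2 := hLf (mu n.+1 - mu n).
rewrite [in X in _ <= X]linearB /= (ipBl hip (L1 _)) !(ipBr hip) (hs (L1 (mu n.+1)) (L1 (mu n))) in hl2.
exact: (sc4 hdt hD e2 erefl (hs0 n) hcs2 (hs2 n) hl2).
Qed.
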